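(* Let $E$ be a Banach lattice with an order continuous norm, let $\mathfrak{B}$ be a Boolean subalgebra of $\mathfrak{B}(E)$ and let $\xi$ be a forward filtration in $\mathfrak{B}$. (i) If $T,S\colon E\to E$ are commuting $\mathfrak{B}$-Volterra operators then $\hat{T}_\xi$ and $\hat{S}_\xi$ commute on $\mathcal{M}_0(\xi)$. (ii) If $T$ is $\mathfrak{B}$-Volterra and $S=\pi T$ for some $\pi\in\mathfrak{B}$, then $\hat{S}_\xi=\pi\cdot\hat{T}_\xi$. (iii) If $T$ is $\mathfrak{B}$-Volterra and $S=\pi+T-\pi T$ for some $\pi\in\mathfrak{B}$, then $\hat{S}_\xi=\hat{\pi}_\xi+\hat{T}_\xi-\pi\cdot\hat{T}_\xi$.
   Context: $\mathfrak{B}(E)$ is the Boolean algebra of all order projections on $E$ ($\pi\le\rho$ iff $\pi\rho=\pi$, zero $\mathbf 0$, unit $\mathbf 1=I_E$). A positive operator $T$ is $\mathfrak{B}$-Volterra if for all $\pi\in\mathfrak{B}$, $x,y\in E$, $\pi x=\pi y$ implies $\pi Tx=\pi Ty$. A forward filtration in $\mathfrak{B}$ is a map $\xi\colon\{0,1,\dots,\infty\}\to\mathfrak{B}$ with $\xi_n\le\xi_{n+1}$, $\xi_0=\mathbf 0$, $\xi_\infty=\mathbf 1$. $\mathcal{M}_0(\xi)$ is the set of sequences $(x_n)_{n\ge1}$ in $E$ with $\xi_nx_m=x_n$ whenever $m\ge n\ge1$. For a positive operator $R$ on $E$ (in particular $R=\pi\in\mathfrak{B}$), $\hat{R}_\xi((x_n)_{n\ge1})=(\xi_nRx_n)_{n\ge1}$,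 and $\pi\cdot(x_n)_{n\ge1}=(\pi x_n)_{n\ge1}$. *)

(* Defs.v *)
From HB Require Import structures.
From mathcomp Require Import all_boot all_order all_algebra.
From mathcomp Require Import all_classical all_reals.
From mathcomp Require Import topology normedtype.
Set Implicit Arguments. Unset Strict Implicit. Unset Printing Implicit Defensive.
Import Order.TTheory GRing.Theory Num.Theory.
Import numFieldNormedType.Exports.
Local Open Scope classical_set_scope.
Local Open Scope ring_scope.

Section Defs.
Variables (R : realType) (E : normedModType R) (le : E -> E -> Prop).

Definition is_sup2 (x y z : E) : Prop :=
  le x z /\ le y z /\ (forall w, le x w -> le y w -> le z w).

(* E, ordered by le, is a (normed) vector lattice with a lattice norm.
   Completeness comes from E being a completeNormedModType in the theorem. *)
Record normed_vector_lattice : Prop := {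
  nvl_refl : forall x, le x x;
  nvl_antisym : forall x y, le x y -> le y x -> x = y;
  nvl_trans : forall x y z, le x y -> le y z -> le x z;
  nvl_add : forall x y z, le x y -> le (x + z) (y + z);
  nvl_scale : forall (a : R) x y, 0 <= a -> le x y -> le (a *: x) (a *: y);
  nvl_sup : forall x y, exists z, is_sup2 x y z;
  (* lattice norm: |x| <= |y| implies ||x|| <= ||y||, with |x| = sup(x,-x) *)
  nvl_norm : forall x y ax ay, is_sup2 x (- x) ax -> is_sup2 y (- y) ay ->
               le ax ay -> `|x| <= `|y| }.

Definition is_inf (D : set E) (z : E) : Prop :=
  (forall x, D x -> le z x) /\ (forall w, (forall x, D x -> le w x) -> le w z).

(* order continuous norm: every downward directed set (= net indexed by
   itself) x_a decreasing to 0 has ||x_a|| -> 0 *)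
Definition order_continuous_norm : Prop :=
  forall D : set E, D !=set0 ->
    (forall x y, D x -> D y -> exists z, [/\ D z, le z x & le z y]) ->
    is_inf D 0 ->
    forall e : R, 0 < e -> exists x, D x /\ `|x| < e.

Definition linear_op (T : E -> E) : Prop :=
  forall (a : R) x y, T (a *: x + y) = a *: T x + T y.

Definition positive_op (T : E -> E) : Prop :=
  linear_op T /\ forall x, le 0 x -> le 0 (T x).

Definition order_projection (P : E -> E) : Prop :=
  [/\ linear_op P, (forall x, P (P x) = P x) &
      (forall x, le 0 x -> le 0 (P x) /\ le (P x) x)].

(* Boolean subalgebra of the Boolean algebra B(E) of all order projections:
   zero 0, unit I, meet = composition, complement = I - pi *)
Definition boolean_subalgebra (B : set (E -> E)) : Prop :=
  [/\ (forall pi, B pi -> order_projection pi),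
      B (fun _ => 0), B id,
      (forall pi rho, B pi -> B rho -> B (pi \o rho)) &
      (forall pi, B pi -> B (fun x => x - pi x))].

Definition proj_le (pi rho : E -> E) : Prop := forall x, pi (rho x) = pi x.

(* forward filtration: xi_n for n : nat; xi_oo = I is implicit *)
Definition forward_filtration (B : set (E -> E)) (xi : nat -> E -> E) : Prop :=
  [/\ (forall n, B (xi n)), (forall n, proj_le (xi n) (xi n.+1)) &
      (forall x, xi 0%N x = 0)].

Definition volterra (B : set (E -> E)) (T : E -> E) : Prop :=
  positive_op T /\
  forall pi, B pi -> forall x y, pi x = pi y -> pi (T x) = pi (T y).

(* sequences (x_n)_{n>=1} are functions nat -> E; index 0 is ignored *)
Definition M0 (xi : nat -> E -> E) (x : nat -> E) : Prop :=
  forall n m, (1 <= n)%N -> (n <= m)%N -> xi n (x m) = x n.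

Definition hat (xi : nat -> E -> E) (T : E -> E) (x : nat -> E) : nat -> E :=
  fun n => xi n (T (x n)).

End Defs.

(* Main.v *)
Require Import Defs.
From HB Require Import structures.
From mathcomp Require Import all_boot all_order all_algebra.
From mathcomp Require Import all_classical all_reals.
From mathcomp Require Import topology normedtype.
Import Order.TTheory GRing.Theory Num.Theory.
Import numFieldNormedType.Exports.
Local Open Scope classical_set_scope.
Local Open Scope ring_scope.


Section Helpers.
Local Set Implicit Arguments.
Variables (R : realType) (E : normedModType R).

Lemma lin0 (T : E -> E) : linear_op T -> T 0 = 0.
Proof.
move=> H; have h := H 1 0 0; rewrite !scale1r addr0 in h.
have : T 0 + T 0 = T 0 + 0 by rewrite addr0 -h.
by move/addrI.
Qed.

Lemma linD (T : E -> E) : linear_op T -> forall x y, T (x + y) = T x + T y.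
Proof. by move=> H x y; have := H 1 x y; rewrite !scale1r. Qed.

Lemma linN (T : E -> E) : linear_op T -> forall x, T (- x) = - T x.
Proof.
move=> H x; have := H (-1) x 0; rewrite !addr0 (lin0 H) addr0 !scaleN1r //.
Qed.

Lemma linB (T : E -> E) : linear_op T -> forall x y, T (x - y) = T x - T y.
Proof. by move=> H x y; rewrite (linD H) (linN H). Qed.

Lemma cancel_aux (a b c : E) : a - c = a - b -> c = b.
Proof. by move/addrI/oppr_inj. Qed.

Lemma proj_comm (le : E -> E -> Prop) (B : set (E -> E)) :
  boolean_subalgebra le B -> forall pi rho, B pi -> B rho ->
  forall x, pi (rho x) = rho (pi x).
Proof.
case=> Hp _ _ Hc Hcomp pi rho Bpi Brho x.
have Lpi : linear_op pi by case: (Hp _ Bpi).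
have Lrho : linear_op rho by case: (Hp _ Brho).
have Ipi : forall y, pi (pi y) = pi y by case: (Hp _ Bpi).
have Irho : forall y, rho (rho y) = rho y by case: (Hp _ Brho).
have Ipr : forall y, pi (rho (pi (rho y))) = pi (rho y).
  by move=> y; case: (Hp _ (Hc _ _ Bpi Brho)) => _ /(_ y) /= h _.
have Irp : forall y, rho (pi (rho (pi y))) = rho (pi y).
  by move=> y; case: (Hp _ (Hc _ _ Brho Bpi)) => _ /(_ y) /= h _.
have e1 : rho (pi (rho x)) = pi (rho x).
  have h : rho (rho x - pi (rho x)) - pi (rho (rho x - pi (rho x))) = rho x - pi (rho x).
    by case: (Hp _ (Hc _ _ (Hcomp _ Bpi) Brho)) => _ /(_ x) h _; exact h.
  move: h; rewrite (linB Lrho) (linB Lpi) Irho Ipr.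
  rewrite subrr subr0 => h; apply: cancel_aux h.
have e2 : rho (pi (rho x)) = rho (pi x).
  have h : rho (rho (x - pi x) - pi (rho (x - pi x))) = rho (x - pi x).
    by case: (Hp _ (Hc _ _ Brho (Hcomp _ Bpi))) => _ /(_ x) h _; exact h.
  move: h; do 3 rewrite ?(linB Lrho) ?(linB Lpi).
  rewrite !Irho Irp.
  rewrite opprB addrA subrK => h; apply: cancel_aux h.
by rewrite -e1 e2.
Qed.

End Helpers.

Theorem corollary4p4 (R : realType) (E : completeNormedModType R)
  (le : E -> E -> Prop) (B : set (E -> E)) (xi : nat -> E -> E) :
  normed_vector_lattice le ->
  order_continuous_norm le ->
  boolean_subalgebra le B ->
  forward_filtration B xi ->
  [/\ (forall T S : E -> E, volterra le B T -> volterra le B S ->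
         (forall y, T (S y) = S (T y)) ->
         forall x, M0 xi x -> forall n, (1 <= n)%N ->
           hat xi T (hat xi S x) n = hat xi S (hat xi T x) n),
      (forall (T pi : E -> E), volterra le B T -> B pi ->
         forall x, M0 xi x -> forall n, (1 <= n)%N ->
           hat xi (fun y => pi (T y)) x n = pi (hat xi T x n)) &
      (forall (T pi : E -> E), volterra le B T -> B pi ->
         forall x, M0 xi x -> forall n, (1 <= n)%N ->
           hat xi (fun y => pi y + T y - pi (T y)) x n =
           hat xi pi x n + hat xi T x n - pi (hat xi T x n))].

Proof.
move=> _ _ HB [Bxi _ _].
have Hp := (let: And5 h _ _ _ _ := HB in h).
split.
- move=> T S [_ VT] [_ VS] TS x _ n _; rewrite /hat.
  have Ixi : forall y, xi n (xi n y) = xi n y by case: (Hp _ (Bxi n)).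
  rewrite (VT _ (Bxi n) (xi n (S (x n))) (S (x n))) ?Ixi //.
  rewrite (VS _ (Bxi n) (xi n (T (x n))) (T (x n))) ?Ixi //.
  by rewrite TS.
- move=> T pi _ Bpi x _ n _; rewrite /hat.
  have h := proj_comm HB _ _ (Bxi n) Bpi (T (x n)); exact h.
- move=> T pi _ Bpi x _ n _; rewrite /hat.
  have Lxi : linear_op (xi n) by case: (Hp _ (Bxi n)).
  have e1 := linB Lxi (pi (x n) + T (x n)) (pi (T (x n))).
  have e2 := linD Lxi (pi (x n)) (T (x n)).
  have e3 := proj_comm HB _ _ (Bxi n) Bpi (T (x n)).
  rewrite e2 e3 in e1; exact e1.
Qed.
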